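(* Let $h_1,h_2\in\mathbb{C}\setminus\{0\}$ with $|h_1|\le|h_2|$, deadlines $D_1<D_2$, minimum blocklength $\hat m>0$, power budget $P_{\max}>0$, packet sizes $N_1,N_2>0$ and error probabilities $\epsilon_1,\epsilon_2\in(0,1)$. For $k=1,2$ define, for $m>0,\gamma>0$, $$F_k(m,\gamma)=\sqrt{\frac{1}{m}\left(1-\frac{1}{(\gamma+1)^2}\right)}\,\frac{Q^{-1}(\epsilon_k)}{\ln 2}-\log_2(1+\gamma)+\frac{N_k}{m},$$ and let $\Gamma_k(m)$ denote the implicit function defined by $F_k(m,\Gamma_k(m))=0$, $\Gamma_k(m)>0$. Consider the problem $$\min_{\{m_k,p_k,\gamma_k\}_{k=1,2}} m_1p_1+m_2p_2$$ subject to $F_k(m_k,\gamma_k)=0$, $\hat m\le m_k\le D_k$, $p_k\ge0$ for $k=1,2$, $p_1+p_2\le P_{\max}$, $\gamma_1=\frac{p_1|h_1|^2}{p_2|h_1|^2+1}$, $\gamma_2=p_2|h_2|^2$. Suppose that $\frac{Q^{-1}(\epsilon_k)}{\sqrt{N_k}}\le \frac{2\sqrt{\ln 2}}{4-\sqrt2}=0.64394\ldots$ for $k=1,2$ and that the problem is feasible. Then an optimal solution is $$m_k^*=D_k,\quad \gamma_k^*=\Gamma_k(D_k)\ (k=1,2),\quad p_1^*=\frac{\gamma_1^*\gamma_2^*}{|h_2|^2}+\frac{\gamma_1^*}{|h_1|^2},\quad p_2^*=\frac{\gamma_2^*}{|h_2|^2}.$$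
   Context: $Q^{-1}$ is the inverse of the Gaussian Q-function. The setting is a two-user single-antenna downlink with superposition coding and unit noise variances; receiver 1 treats receiver 2's signal as noise and receiver 2 performs successive interference cancellation. Blocklengths $m_k$ are treated as continuous variables. The constraint $F_k(m_k,\gamma_k)=0$ is the finite-blocklength rate relation $\frac{N_k}{m_k}=\log_2(1+\gamma_k)-\sqrt{\frac{1}{m_k}\big(1-\frac{1}{(1+\gamma_k)^2}\big)}\frac{Q^{-1}(\epsilon_k)}{\ln2}$. *)

(* Defs.v *)
From Stdlib Require Import Reals.
From Coquelicot Require Import Coquelicot.
Open Scope R_scope.

Definition Qfun (x : R) : R :=
  / sqrt (2 * PI) *
  RInt_gen (fun t => exp (- (t ^ 2) / 2)) (at_point x) (Rbar_locally p_infty).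

Definition log2 (x : R) : R := ln x / ln 2.

(* F_k(m, gamma), with qinv = Q^{-1}(eps_k) and N = N_k. *)
Definition Ffun (qinv N m gam : R) : R :=
  sqrt (/ m * (1 - / ((gam + 1) ^ 2))) * qinv / ln 2 - log2 (1 + gam) + N / m.

(* Feasible set of the optimization problem; g1 = |h1|^2, g2 = |h2|^2. *)
Definition feasible (g1 g2 mhat D1 D2 Pmax q1 q2 N1 N2 : R)
  (m1 m2 p1 p2 gam1 gam2 : R) : Prop :=
  Ffun q1 N1 m1 gam1 = 0 /\ Ffun q2 N2 m2 gam2 = 0 /\
  mhat <= m1 <= D1 /\ mhat <= m2 <= D2 /\
  0 <= p1 /\ 0 <= p2 /\ p1 + p2 <= Pmax /\
  gam1 = p1 * g1 / (p2 * g1 + 1) /\ gam2 = p2 * g2.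

(* Main.v *)
Require Import Defs.
From Stdlib Require Import Reals Lra Psatz.
From Coquelicot Require Import Coquelicot.
Open Scope R_scope.

Lemma mono_le (f df : R -> R) (a b : R) : a <= b ->
  (forall x, a <= x <= b -> is_derive f x (df x)) ->
  (forall x, a <= x <= b -> 0 <= df x) -> f a <= f b.
Proof.
  intros Hab Hd Hp.
  destruct (MVT_gen f a b df) as [c [Hc Heq]].
  - intros x Hx. apply Hd. rewrite Rmin_left in Hx by lra. rewrite Rmax_right in Hx by lra. lra.
  - intros x Hx. rewrite Rmin_left in Hx by lra. rewrite Rmax_right in Hx by lra.
    apply continuity_pt_filterlim. apply (ex_derive_continuous (K:=R_AbsRing) (V:=R_NormedModule)).
    eexists. apply Hd. lra.
  - rewrite Rmin_left in Hc by lra. rewrite Rmax_right in Hc by lra.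
    assert (0 <= df c) by (apply Hp; lra).
    assert (0 <= df c * (b - a)) by (apply Rmult_le_pos; lra). lra.
Qed.

Lemma ln_le_minus1 y : 0 < y -> ln y <= y - 1.
Proof. intros Hy. pose proof (exp_ineq1_le (ln y)). rewrite exp_ln in H; lra. Qed.

Lemma ln_lower g : 0 <= g -> 2*g/(2+g) <= ln (1+g).
Proof.
  intros Hg.
  assert (H := mono_le (fun y => ln (1+y) - 2*y/(2+y))
     (fun y => y^2 / ((1+y)*(2+y)^2)) 0 g Hg).
  simpl in H.
  assert (E0 : ln (1+0) - 2*0/(2+0) = 0).
  { replace (1+0) with 1 by ring. rewrite ln_1. field. }
  cut (ln (1+0) - 2*0/(2+0) <= ln (1 + g) - 2 * g / (2 + g)); [lra|].
  apply H.
  - intros x Hx. auto_derive. lra. field. lra.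
  - intros x Hx. apply Rle_mult_inv_pos. nra. apply Rmult_lt_0_compat; nra.
Qed.
Definition bb g := sqrt (g+2) / (1+g).
Definition CC g := ln (1+g) / g.
Definition SS q Nl g := sqrt (q^2 * bb g ^2 + 4*Nl*CC g).
Definition vv q Nl g := (- (q * bb g) + SS q Nl g) / (2*Nl).
Definition dbb g := / (2 * sqrt (g+2)) / (1+g) - sqrt (g+2) / (1+g)^2.
Definition dCC g := (g/(1+g) - ln(1+g)) / g^2.
Definition dvv q Nl g := (dCC g - q * dbb g * vv q Nl g) / SS q Nl g.

Lemma CC_pos g : 0 < g -> 0 < CC g.
Proof. intros. unfold CC. apply Rdiv_lt_0_compat; [|lra].
  rewrite <- ln_1. apply ln_increasing; lra. Qed.

Lemma SS_pos q Nl g : 0 < Nl -> 0 < g -> 0 < SS q Nl g.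
Proof. intros. unfold SS. apply sqrt_lt_R0. pose proof (CC_pos g H0).
  assert (0 <= (q * bb g)^2) by (apply pow2_ge_0). nra. Qed.

Lemma vv_deriv q Nl g : 0 < Nl -> 0 < g -> is_derive (vv q Nl) g (dvv q Nl g).
Proof.
  intros HN Hg. pose proof (SS_pos q Nl g HN Hg) as HS.
  assert (Hs : 0 < sqrt (g+2)) by (apply sqrt_lt_R0; lra).
  unfold dvv, vv, dCC, dbb, SS, CC, bb in *.
  set (S := sqrt (q ^ 2 * (sqrt (g + 2) / (1 + g)) ^ 2 + 4 * Nl * (ln (1 + g) / g))) in *.
  assert (HC : 0 < ln (1+g) / g) by (apply (CC_pos g Hg)).
  auto_derive.
  - repeat split; try lra.
    assert (0 <= (q * (sqrt (g + 2) / (1 + g)))^2) by (apply pow2_ge_0).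
    unfold Rdiv in *. nra.
  - assert (E : sqrt (q * (q * 1) * (sqrt (g + 2) * / (1 + g) * (sqrt (g + 2) * / (1 + g) * 1)) +
      4 * Nl * (ln (1 + g) * / g)) = S).
    { unfold S. f_equal; field. }
    rewrite E. field. repeat split; lra.
Qed.
Lemma alg (Nl q g s L : R) : 0<Nl -> 0<q -> q^2 <= 16/25*Nl -> 0<g -> 0<s -> s^2 = g+2 ->
  2*g/(2+g) <= L ->
  0 <= Nl*((L - g/(1+g))*2*s*(1+g)^2/(g^2*(g+3)))^2
       + q^2*(s/(1+g)*((L - g/(1+g))*2*s*(1+g)^2/(g^2*(g+3))) - L/g).
Proof.
  intros HN Hq Hq2 Hg Hs Hs2 HL.
  set (x := 1+g).
  set (A := L - g/x).
  set (A0 := g^2/((2+g)*x)).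
  set (k := 2*s*x^2/(g^2*(g+3))).
  assert (Hx : 0 < x) by (unfold x; lra).
  assert (HA0 : 0 <= A0) by (unfold A0; apply Rle_mult_inv_pos; [nra|apply Rmult_lt_0_compat; lra]).
  assert (HAA0 : A0 <= A).
  { unfold A, A0. assert (2*g/(2+g) - g/x = g^2/((2+g)*x)) by (unfold x; field; lra). lra. }
  assert (Hk2 : k^2 = 4*(g+2)*x^4/(g^4*(g+3)^2)).
  { unfold k. replace ((2 * s * x ^ 2 / (g ^ 2 * (g + 3))) ^ 2) with (4*s^2*x^4/(g^4*(g+3)^2)) by (field; lra).
    rewrite Hs2. reflexivity. }
  assert (Hbk : s/x*k = 2*(g+2)*x/(g^2*(g+3))).
  { unfold k. replace (s / x * (2 * s * x ^ 2 / (g ^ 2 * (g + 3)))) with (2*s^2*x/(g^2*(g+3))) by (field; lra).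
    rewrite Hs2. reflexivity. }
  assert (HLg : L/g = A/g + 1/x) by (unfold A; field; lra).
  replace (A * 2 * s * x ^ 2 / (g ^ 2 * (g + 3))) with (k*A) by (unfold k; field; lra).
  replace (s / x * (k * A)) with ((s/x*k)*A) by ring.
  rewrite HLg, Hbk.
  replace ((k*A)^2) with (k^2*A^2) by ring. rewrite Hk2.
  set (c1 := 4 * (g + 2) * x ^ 4 / (g ^ 4 * (g + 3) ^ 2)).
  set (c2 := 2 * (g + 2) * x / (g ^ 2 * (g + 3)) - /g).
  assert (Hc1 : 0 <= c1) by (unfold c1; apply Rle_mult_inv_pos; [apply Rmult_le_pos; [lra|apply pow_le; lra] | apply Rmult_lt_0_compat; apply pow_lt; lra]).
  assert (Hc2 : 0 <= c2).
  { unfold c2. replace (2 * (g + 2) * x / (g ^ 2 * (g + 3)) - / g) with ((g^2+3*g+4)/(g^2*(g+3))) by (unfold x; field; lra).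
    apply Rle_mult_inv_pos; [nra| apply Rmult_lt_0_compat; nra]. }
  assert (Hmono : Nl*(c1*A0^2) + q^2*(2 * (g + 2) * x / (g ^ 2 * (g + 3)) * A0 - (A0/g + 1/x))
                  <= Nl*(c1*A^2) + q^2*(2 * (g + 2) * x / (g ^ 2 * (g + 3)) * A - (A/g + 1/x))).
  { assert (c1*A0^2 <= c1*A^2) by (apply Rmult_le_compat_l; [lra| apply pow_incr; lra]).
    assert (0 <= q^2 * (c2*(A - A0))) by (apply Rmult_le_pos; [apply pow2_ge_0| apply Rmult_le_pos; lra]).
    assert (0 <= Nl*(c1*A^2 - c1*A0^2)) by (apply Rmult_le_pos; lra).
    assert (E : Nl*(c1*A^2) + q^2*(2 * (g + 2) * x / (g ^ 2 * (g + 3)) * A - (A/g + 1/x))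
       - (Nl*(c1*A0^2) + q^2*(2 * (g + 2) * x / (g ^ 2 * (g + 3)) * A0 - (A0/g + 1/x)))
       = Nl*(c1*A^2 - c1*A0^2) + q^2 * (c2*(A - A0))) by (unfold c2; field; lra).
    lra. }
  assert (Hbase : Nl*(c1*A0^2) + q^2*(2 * (g + 2) * x / (g ^ 2 * (g + 3)) * A0 - (A0/g + 1/x))
     = 2*(2*Nl*x^2 - q^2*(g+3))/((g+3)^2*(g+2))).
  { unfold c1, A0, x. field. repeat split; lra. }
  assert (0 <= 2*(2*Nl*x^2 - q^2*(g+3))/((g+3)^2*(g+2))).
  { apply Rle_mult_inv_pos; [|apply Rmult_lt_0_compat; nra].
    unfold x. assert (0 <= g^2) by nra. nra. }
  lra.
Qed.

Lemma vv_root q Nl g : 0 < Nl -> 0 < g ->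
  Nl * vv q Nl g ^ 2 + q * bb g * vv q Nl g = CC g /\ 0 < vv q Nl g.
Proof.
  intros HN Hg. pose proof (SS_pos q Nl g HN Hg) as HS. pose proof (CC_pos g Hg) as HC.
  assert (HS2 : SS q Nl g ^ 2 = q^2 * bb g ^2 + 4*Nl*CC g).
  { unfold SS. apply pow2_sqrt. assert (0 <= (q * bb g)^2) by apply pow2_ge_0. nra. }
  unfold vv. split.
  - replace (Nl * ((- (q * bb g) + SS q Nl g) / (2 * Nl)) ^ 2 +
       q * bb g * ((- (q * bb g) + SS q Nl g) / (2 * Nl))) with
      ((SS q Nl g ^ 2 - (q * bb g)^2) / (4*Nl)) by (field; lra).
    rewrite HS2. field. lra.
  - apply Rdiv_lt_0_compat; [|lra].
    destruct (Rle_or_lt (q * bb g) 0); [lra|].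
    nra.
Qed.

Lemma dvv_nonpos q Nl g : 0 < Nl -> 0 < g -> (0 < q -> q^2 <= 16/25*Nl) ->
  dvv q Nl g <= 0.
Proof.
  intros HN Hg Hq.
  pose proof (SS_pos q Nl g HN Hg) as HS.
  destruct (vv_root q Nl g HN Hg) as [Hr Hv].
  set (v := vv q Nl g) in *.
  set (s := sqrt (g+2)).
  assert (Hs : 0 < s) by (apply sqrt_lt_R0; lra).
  assert (Hs2 : s^2 = g+2) by (apply pow2_sqrt; lra).
  set (L := ln (1+g)).
  assert (HLx : g/(1+g) <= L).
  { pose proof (ln_le_minus1 (/(1+g)) ltac:(apply Rinv_0_lt_compat; lra)). rewrite ln_Rinv in H by lra.
    assert (/(1+g) - 1 = - (g/(1+g))) by (field; lra). unfold L. lra. }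
  assert (Hdb : dbb g = - (g+3) / (2*s*(1+g)^2)).
  { unfold dbb. fold s. replace (/ (2 * s) / (1 + g) - s / (1 + g) ^ 2) with (((1+g) - 2*s^2)/(2*s*(1+g)^2)) by (field; lra).
    rewrite Hs2. field. lra. }
  assert (Hdb0 : dbb g < 0).
  { rewrite Hdb. apply Ropp_lt_cancel. rewrite Ropp_0. unfold Rdiv. rewrite Ropp_mult_distr_l_reverse, Ropp_involutive.
    apply Rmult_lt_0_compat; [lra|]. apply Rinv_0_lt_compat. apply Rmult_lt_0_compat; [lra|]. apply pow_lt; lra. }
  assert (HdC : dCC g = (g/(1+g) - L)/g^2) by reflexivity.
  unfold dvv. fold v. apply Rmult_le_0_r; [| left; apply Rinv_0_lt_compat; exact HS].
  assert (HdC0 : dCC g <= 0).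
  { rewrite HdC. unfold Rdiv. apply Rmult_le_0_r; [lra|]. left. apply Rinv_0_lt_compat. apply pow_lt; lra. }
  destruct (Rle_or_lt q 0) as [Hq0|Hq0].
  - assert (0 <= q * dbb g * v).
    { apply Rmult_le_pos; [|lra]. nra. }
    lra.
  - set (R0 := (L - g/(1+g))*2*s*(1+g)^2/(g^2*(g+3))).
    assert (Halg := alg Nl q g s L HN Hq0 (Hq Hq0) Hg Hs Hs2).
    assert (HL : 2*g/(2+g) <= L) by (apply ln_lower; lra).
    specialize (Halg HL). fold R0 in Halg.
    assert (HR0 : 0 <= R0).
    { unfold R0. apply Rle_mult_inv_pos.
      - apply Rmult_le_pos; [|apply pow_le; lra]. apply Rmult_le_pos; [|lra]. lra.
      - apply Rmult_lt_0_compat; [apply pow_lt; lra| lra]. }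
    assert (Hbb : bb g = s/(1+g)) by reflexivity.
    assert (HCC : CC g = L/g) by reflexivity.
    set (y := R0 / q).
    assert (HPy : 0 <= Nl*y^2 + q*bb g*y - CC g).
    { replace (Nl*y^2 + q*bb g*y - CC g) with ((Nl*R0^2 + q^2*(s/(1+g)*R0 - L/g))/q^2)
        by (unfold y; rewrite Hbb, HCC; field; lra).
      apply Rle_mult_inv_pos; [lra| apply pow_lt; lra]. }
    assert (Hb : 0 < bb g).
    { rewrite Hbb. apply Rdiv_lt_0_compat; lra. }
    assert (Hvy : v <= y).
    { destruct (Rle_or_lt v y) as [|Hlt]; [lra|].
      assert (0 <= y) by (unfold y; apply Rle_mult_inv_pos; lra).
      assert (0 < (v - y)*(Nl*(v+y) + q*bb g)).
      { apply Rmult_lt_0_compat; [lra|]. nra. }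
      nra. }
    assert (Hqv : q*v <= R0).
    { unfold y in Hvy. apply (Rmult_le_compat_l q) in Hvy; [|lra].
      replace (q * (R0/q)) with R0 in Hvy by (field; lra). lra. }
    rewrite HdC, Hdb.
    replace ((g / (1 + g) - L) / g ^ 2 - q * (- (g + 3) / (2 * s * (1 + g) ^ 2)) * v)
      with ((g / (1 + g) - L) / g ^ 2 + (q*v) * ((g + 3) / (2 * s * (1 + g) ^ 2))) by (field; lra).
    assert (Hpos : 0 < (g + 3) / (2 * s * (1 + g) ^ 2)).
    { apply Rdiv_lt_0_compat; [lra|]. apply Rmult_lt_0_compat; [lra| apply pow_lt; lra]. }
    assert (E : (g / (1 + g) - L) / g ^ 2 + R0 * ((g + 3) / (2 * s * (1 + g) ^ 2)) = 0)
      by (unfold R0; field; repeat split; lra).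
    assert ((q*v) * ((g + 3) / (2 * s * (1 + g) ^ 2)) <= R0 * ((g + 3) / (2 * s * (1 + g) ^ 2)))
      by (apply Rmult_le_compat_r; lra).
    lra.
Qed.

Lemma vv_decr q Nl a b : 0 < Nl -> (0 < q -> q^2 <= 16/25*Nl) -> 0 < a <= b ->
  vv q Nl b <= vv q Nl a.
Proof.
  intros HN Hq Hab.
  assert (H := mono_le (fun g => - vv q Nl g) (fun g => - dvv q Nl g) a b (proj2 Hab)).
  cut (- vv q Nl a <= - vv q Nl b); [lra|]. apply H.
  - intros x Hx. apply (is_derive_opp (vv q Nl)). apply vv_deriv; lra.
  - intros x Hx. pose proof (dvv_nonpos q Nl x HN ltac:(lra) Hq). lra.
Qed.

Lemma ln2_pos : 0 < ln 2.
Proof. rewrite <- ln_1. apply ln_increasing; lra. Qed.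

Lemma V_nonneg g : 0 <= g -> 0 <= 1 - / ((g+1)^2).
Proof. intros. assert (1 <= (g+1)^2) by nra.
  assert (/((g+1)^2) <= 1). { rewrite <- Rinv_1. apply Rinv_le_contravar; lra. } lra. Qed.

Lemma F_unpack q N m g : 0 < N -> 0 < m -> 0 <= g -> Ffun q N m g = 0 ->
  0 < g /\ N * ln 2 * (/m) + q * sqrt (1 - / ((g+1)^2)) * sqrt (/m) = ln (1+g).
Proof.
  intros HN Hm Hg HF. unfold Ffun, log2 in HF.
  pose proof ln2_pos as Hl2.
  rewrite sqrt_mult in HF by (try apply V_nonneg; try (left; apply Rinv_0_lt_compat); lra).
  assert (E : N * ln 2 * (/m) + q * sqrt (1 - / ((g+1)^2)) * sqrt (/m) = ln (1+g)).
  { apply (Rmult_eq_compat_l (ln 2)) in HF. rewrite Rmult_0_r in HF.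
    replace (ln 2 * (sqrt (/ m) * sqrt (1 - / (g + 1) ^ 2) * q / ln 2 - ln (1 + g) / ln 2 + N / m))
      with (N * ln 2 * (/m) + q * sqrt (1 - / ((g+1)^2)) * sqrt (/m) - ln (1+g)) in HF by (field; lra).
    lra. }
  split; [|exact E].
  destruct (Rle_lt_or_eq_dec 0 g Hg) as [|Hg0]; [assumption|].
  subst g. exfalso.
  replace (1 - / ((0+1)^2)) with 0 in E by (field).
  rewrite sqrt_0 in E. replace (1+0) with 1 in E by ring. rewrite ln_1 in E.
  assert (0 < N * ln 2 * / m) by (apply Rmult_lt_0_compat; [nra| apply Rinv_0_lt_compat; lra]).
  lra.
Qed.

Lemma w_eq g : 0 < g -> sqrt (1 - / ((g+1)^2)) = sqrt g * bb g.
Proof.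
  intros Hg. unfold bb.
  assert (Hs : 0 <= sqrt g) by apply sqrt_pos.
  assert (Hs2 : 0 <= sqrt (g+2)) by apply sqrt_pos.
  rewrite <- (sqrt_pow2 (sqrt g * (sqrt (g + 2) / (1 + g)))).
  - f_equal. replace ((sqrt g * (sqrt (g + 2) / (1 + g))) ^ 2) with
      (sqrt g ^2 * sqrt (g+2) ^2 / (1+g)^2) by (field; lra).
    rewrite !pow2_sqrt by lra. field. lra.
  - apply Rmult_le_pos; [lra|]. apply Rle_mult_inv_pos; lra.
Qed.

Lemma vv_eq q N m g : 0 < N -> 0 < m -> 0 < g ->
  N * ln 2 * (/m) + q * sqrt (1 - / ((g+1)^2)) * sqrt (/m) = ln (1+g) ->
  vv q (N * ln 2) g ^ 2 = / (m * g).
Proof.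
  intros HN Hm Hg E.
  pose proof ln2_pos as Hl2.
  assert (HNl : 0 < N * ln 2) by nra.
  destruct (vv_root q (N * ln 2) g HNl Hg) as [Hr Hv].
  set (v := vv q (N * ln 2) g) in *.
  set (sg := sqrt g).
  assert (Hsg : 0 < sg) by (apply sqrt_lt_R0; lra).
  assert (Hsg2 : sg^2 = g) by (apply pow2_sqrt; lra).
  set (sm := sqrt (/m)).
  assert (Hsm : 0 < sm) by (apply sqrt_lt_R0; apply Rinv_0_lt_compat; lra).
  assert (Hsm2 : sm^2 = /m) by (apply pow2_sqrt; left; apply Rinv_0_lt_compat; lra).
  rewrite w_eq in E by lra. fold sg sm in E.
  set (z := sm / sg).
  assert (Hz : 0 < z) by (apply Rdiv_lt_0_compat; lra).
  assert (Hzr : N * ln 2 * z^2 + q * bb g * z = CC g).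
  { unfold CC, z. rewrite <- E, <- Hsm2.
    remember (bb g) as b. clearbody sg. rewrite <- Hsg2. field. lra. }
  pose proof (CC_pos g Hg) as HC.
  assert (Hzv : z = v).
  { assert (0 < N * ln 2 * z + q * bb g) by nra.
    assert (Hp : (z - v) * (N * ln 2 * (z + v) + q * bb g) = 0) by nra.
    assert (0 < N * ln 2 * (z + v) + q * bb g) by nra.
    apply Rmult_integral in Hp. destruct Hp; lra. }
  rewrite <- Hzv. unfold z. replace ((sm/sg)^2) with (sm^2/sg^2) by (field; lra).
  rewrite Hsm2, Hsg2. field. lra.
Qed.

Lemma gam_le q N m D g gs : 0 < N -> (0 < q -> q^2 <= 16/25*(N*ln 2)) -> 0 < m <= D ->
  0 < g -> 0 < gs ->
  N * ln 2 * (/m) + q * sqrt (1 - / ((g+1)^2)) * sqrt (/m) = ln (1+g) ->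
  N * ln 2 * (/D) + q * sqrt (1 - / ((gs+1)^2)) * sqrt (/D) = ln (1+gs) ->
  gs <= g.
Proof.
  intros HN Hq Hm Hg Hgs E Es.
  pose proof ln2_pos as Hl2.
  set (Nl := N * ln 2) in *.
  assert (HNl : 0 < Nl) by (unfold Nl; nra).
  destruct (Rle_or_lt gs g) as [|Hlt]; [assumption|exfalso].
  set (sm := sqrt (/m)) in *. set (sD := sqrt (/D)) in *.
  assert (Hsm : 0 < sm) by (apply sqrt_lt_R0; apply Rinv_0_lt_compat; lra).
  assert (Hsm2 : sm^2 = /m) by (apply pow2_sqrt; left; apply Rinv_0_lt_compat; lra).
  assert (HsD : 0 < sD) by (apply sqrt_lt_R0; apply Rinv_0_lt_compat; lra).
  assert (HsD2 : sD^2 = /D) by (apply pow2_sqrt; left; apply Rinv_0_lt_compat; lra).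
  assert (HsDm : sD <= sm).
  { apply sqrt_le_1; try (left; apply Rinv_0_lt_compat; lra). apply Rinv_le_contravar; lra. }
  set (x := g + 1) in *. set (xs := gs + 1) in *.
  set (w := sqrt (1 - / x^2)) in *. set (ws := sqrt (1 - / xs^2)) in *.
  assert (Hw2 : w^2 = 1 - /x^2) by (apply pow2_sqrt; apply V_nonneg; lra).
  assert (Hws2 : ws^2 = 1 - /xs^2) by (apply pow2_sqrt; apply V_nonneg; lra).
  assert (Hw0 : 0 <= w) by apply sqrt_pos.
  assert (Hinv : / xs^2 < / x^2).
  { apply Rinv_lt_contravar; [apply Rmult_lt_0_compat; apply pow_lt; unfold x, xs; lra|].
    unfold x, xs. nra. }
  assert (Hww : w <= ws).
  { apply sqrt_le_1; try (apply V_nonneg; lra). lra. }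
  assert (Hws : 0 < ws).
  { apply sqrt_lt_R0. assert (Hi : /xs^2 < /1).
    { apply Rinv_lt_contravar; [rewrite Rmult_1_l; apply pow_lt; unfold xs; lra|]. unfold xs; nra. }
    rewrite Rinv_1 in Hi. lra. }
  set (L := ln (1+g)) in *. set (Ls := ln (1+gs)) in *.
  assert (HL : 0 < L) by (unfold L; rewrite <- ln_1; apply ln_increasing; lra).
  assert (HLL : L < Ls) by (unfold L, Ls; apply ln_increasing; lra).
  rewrite <- Hsm2 in E. rewrite <- HsD2 in Es.
  assert (Hpos : 0 < Nl * sm + q * w).
  { assert (0 < sm * (Nl * sm + q * w)) by nra. nra. }
  assert (Hdec : Ls - L = (sD - sm) * (Nl * (sD + sm) + q * w) + q * sD * (ws - w)) by nra.
  assert (H1 : (sD - sm) * (Nl * (sD + sm) + q * w) <= 0).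
  { apply Rmult_le_0_r; [lra|]. nra. }
  destruct (Rle_or_lt q 0) as [Hq0|Hq0].
  - assert (q * sD * (ws - w) <= 0).
    { apply Rmult_le_0_r; [|lra]. nra. }
    lra.
  -
    specialize (Hq Hq0).
    assert (HLg : L <= g).
    { pose proof (ln_le_minus1 (1+g) ltac:(lra)). unfold L. lra. }
    assert (Hqs2 : (q*sm)^2 <= 16/25 * g).
    { assert (Nl * sm^2 <= L) by (assert (0 <= q * w * sm) by (apply Rmult_le_pos; nra); lra).
      replace ((q*sm)^2) with (q^2 * sm^2) by ring.
      apply Rle_trans with (16/25*Nl*sm^2); [apply Rmult_le_compat_r; nra|]. nra. }
    assert (Hxw2 : (x^2*w)^2 = x^2*g*(g+2)).
    { replace ((x^2*w)^2) with (x^4*w^2) by ring. rewrite Hw2. unfold x. field. lra. }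
    assert (Hqx : q * sm < x^2 * w).
    { assert (0 <= x^2 * w) by (apply Rmult_le_pos; [apply pow2_ge_0|lra]).
      assert ((q*sm)^2 < (x^2*w)^2).
      { rewrite Hxw2. assert (1 <= x^2) by (unfold x; nra). nra. }
      destruct (Rlt_or_le (q*sm) (x^2*w)) as [|Hc]; [assumption|].
      assert ((x^2*w)^2 <= (q*sm)^2) by (apply pow_incr; lra). lra. }
    assert (HlnL : 1 - x/xs <= Ls - L).
    { pose proof (ln_le_minus1 (x/xs) ltac:(apply Rdiv_lt_0_compat; unfold x, xs; lra)).
      rewrite ln_div in H by (unfold x, xs; lra).
      unfold L, Ls, x, xs in *. replace (1+g) with (g+1) by ring. replace (1+gs) with (gs+1) by ring. lra. }
    assert (Hwdiff : (ws - w) * (ws + w) = (xs - x) * (xs + x) / (x^2 * xs^2)).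
    { replace ((ws - w) * (ws + w)) with (ws^2 - w^2) by ring. rewrite Hw2, Hws2.
      field. unfold x, xs; split; lra. }
    assert (Hxx : x < xs) by (unfold x, xs; lra).
    assert (Hx : 1 < x) by (unfold x; lra).
    assert (Hkey : q * sD * (xs + x) < x^2 * xs * (ws + w)).
    { assert (q * sD <= q * sm) by (apply Rmult_le_compat_l; lra).
      assert (q * sD * (xs + x) <= q * sm * (2 * xs)).
      { apply Rmult_le_compat; try nra. }
      assert (q * sm * (2*xs) < x^2 * w * (2*xs)) by (apply Rmult_lt_compat_r; lra).
      assert (x^2 * w * (2*xs) <= x^2 * xs * (ws + w)).
      { replace (x^2 * w * (2*xs)) with (x^2*xs*(2*w)) by ring.
        apply Rmult_le_compat_l; [apply Rmult_le_pos; [apply pow2_ge_0|lra]|lra]. }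
      lra. }
    assert (Hfin : q * sD * (ws - w) < 1 - x/xs).
    { assert (Hwp : 0 < ws + w) by lra.
      apply (Rmult_lt_reg_r (ws + w)); [lra|].
      replace (q * sD * (ws - w) * (ws + w)) with (q * sD * ((ws - w) * (ws + w))) by ring.
      rewrite Hwdiff.
      replace ((1 - x/xs) * (ws + w)) with ((xs - x) * (ws + w) / xs) by (field; lra).
      replace (q * sD * ((xs - x) * (xs + x) / (x ^ 2 * xs ^ 2))) with
        ((xs - x) * (q * sD * (xs + x)) / (x^2 * xs^2)) by (field; lra).
      replace ((xs - x) * (ws + w) / xs) with ((xs - x) * (x^2 * xs * (ws + w)) / (x^2 * xs^2)) by (field; lra).
      unfold Rdiv. apply Rmult_lt_compat_r.
      + apply Rinv_0_lt_compat. apply Rmult_lt_0_compat; apply pow_lt; lra.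
      + apply Rmult_lt_compat_l; lra. }
    lra.
Qed.

Lemma key q N m D g gs : 0 < N -> (0 < q -> q^2 <= 16/25*(N*ln 2)) -> 0 < m <= D ->
  0 <= g -> Ffun q N m g = 0 -> 0 < gs -> Ffun q N D gs = 0 -> gs <= g /\ D * gs <= m * g.
Proof.
  intros HN Hq Hm Hg HF Hgs HFs.
  destruct (F_unpack q N m g HN ltac:(lra) Hg HF) as [Hg0 E].
  destruct (F_unpack q N D gs HN ltac:(lra) ltac:(lra) HFs) as [_ Es].
  assert (Hle := gam_le q N m D g gs HN Hq Hm Hg0 Hgs E Es).
  split; [exact Hle|].
  pose proof ln2_pos as Hl2. assert (HNl : 0 < N * ln 2) by nra.
  assert (Hd := vv_decr q (N * ln 2) gs g HNl Hq (conj Hgs Hle)).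
  pose proof (vv_eq q N m g HN ltac:(lra) Hg0 E) as V1.
  pose proof (vv_eq q N D gs HN ltac:(lra) Hgs Es) as V2.
  destruct (vv_root q (N * ln 2) g HNl Hg0) as [_ P1].
  assert (Hsq : vv q (N * ln 2) g ^ 2 <= vv q (N * ln 2) gs ^ 2) by (apply pow_incr; lra).
  rewrite V1, V2 in Hsq.
  assert (Hp1 : 0 < / (m * g)) by (apply Rinv_0_lt_compat; nra).
  apply Rinv_le_contravar in Hsq; [|exact Hp1].
  rewrite !Rinv_inv in Hsq. lra.
Qed.

Lemma qbound q N : 0 < N -> q / sqrt N <= 2 * sqrt (ln 2) / (4 - sqrt 2) ->
  0 < q -> q^2 <= 16/25*(N*ln 2).
Proof.
  intros HN Hc Hq.
  pose proof ln2_pos as Hl2.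
  assert (Hs2 : sqrt 2 ^ 2 = 2) by (apply pow2_sqrt; lra).
  assert (Hs2p : 0 <= sqrt 2) by apply sqrt_pos.
  assert (Hs2b : sqrt 2 <= 3/2) by nra.
  assert (Hl : 0 <= sqrt (ln 2)) by apply sqrt_pos.
  assert (Hl2s : sqrt (ln 2) ^ 2 = ln 2) by (apply pow2_sqrt; lra).
  assert (HN' : 0 < sqrt N) by (apply sqrt_lt_R0; lra).
  assert (HN2 : sqrt N ^ 2 = N) by (apply pow2_sqrt; lra).
  assert (Hc' : 2 * sqrt (ln 2) / (4 - sqrt 2) <= 4/5 * sqrt (ln 2)).
  { apply (Rmult_le_reg_r (4 - sqrt 2)); [lra|]. replace (2 * sqrt (ln 2) / (4 - sqrt 2) * (4 - sqrt 2)) with (2*sqrt (ln 2)) by (field; lra). nra. }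
  assert (Hq1 : q <= sqrt N * (4/5 * sqrt (ln 2))).
  { assert (q / sqrt N <= 4/5 * sqrt (ln 2)) by lra.
    apply (Rmult_le_compat_l (sqrt N)) in H; [|lra].
    replace (sqrt N * (q / sqrt N)) with q in H by (field; lra). lra. }
  assert (q^2 <= (sqrt N * (4 / 5 * sqrt (ln 2)))^2) by (apply pow_incr; lra).
  replace ((sqrt N * (4 / 5 * sqrt (ln 2)))^2) with (16/25 * (sqrt N ^2 * sqrt (ln 2) ^2)) in H by field.
  rewrite HN2, Hl2s in H. lra.
Qed.

Theorem theorem1
  (h1 h2 : C) (D1 D2 mhat Pmax N1 N2 eps1 eps2 q1 q2 : R)
  (Hh1 : h1 <> 0%C) (Hh2 : h2 <> 0%C) (Hh12 : Cmod h1 <= Cmod h2)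
  (HD : D1 < D2) (Hmhat : 0 < mhat) (HP : 0 < Pmax)
  (HN1 : 0 < N1) (HN2 : 0 < N2)
  (He1 : 0 < eps1 < 1) (He2 : 0 < eps2 < 1)
  (Hq1 : Qfun q1 = eps1) (Hq2 : Qfun q2 = eps2)
  (Hc1 : q1 / sqrt N1 <= 2 * sqrt (ln 2) / (4 - sqrt 2))
  (Hc2 : q2 / sqrt N2 <= 2 * sqrt (ln 2) / (4 - sqrt 2))
  (Hfeas : exists m1 m2 p1 p2 gam1 gam2,
     feasible (Cmod h1 ^ 2) (Cmod h2 ^ 2) mhat D1 D2 Pmax q1 q2 N1 N2
       m1 m2 p1 p2 gam1 gam2)
  (gs1 gs2 : R)
  (Hgs1 : 0 < gs1) (HF1 : Ffun q1 N1 D1 gs1 = 0)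
  (Hgs2 : 0 < gs2) (HF2 : Ffun q2 N2 D2 gs2 = 0) :
  let ps1 := gs1 * gs2 / (Cmod h2 ^ 2) + gs1 / (Cmod h1 ^ 2) in
  let ps2 := gs2 / (Cmod h2 ^ 2) in
  feasible (Cmod h1 ^ 2) (Cmod h2 ^ 2) mhat D1 D2 Pmax q1 q2 N1 N2
    D1 D2 ps1 ps2 gs1 gs2 /\
  (forall m1 m2 p1 p2 gam1 gam2,
     feasible (Cmod h1 ^ 2) (Cmod h2 ^ 2) mhat D1 D2 Pmax q1 q2 N1 N2
       m1 m2 p1 p2 gam1 gam2 ->
     D1 * ps1 + D2 * ps2 <= m1 * p1 + m2 * p2).
Proof.
  intros ps1 ps2.
  assert (Hg1 : 0 < Cmod h1 ^ 2) by (apply pow_lt; apply Cmod_gt_0; exact Hh1).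
  assert (Hg2 : 0 < Cmod h2 ^ 2) by (apply pow_lt; apply Cmod_gt_0; exact Hh2).
  set (g1 := Cmod h1 ^ 2) in *. set (g2 := Cmod h2 ^ 2) in *.
  pose proof (qbound q1 N1 HN1 Hc1) as Hb1.
  pose proof (qbound q2 N2 HN2 Hc2) as Hb2.
  assert (Gen : forall m1 m2 p1 p2 a1 a2,
     feasible g1 g2 mhat D1 D2 Pmax q1 q2 N1 N2 m1 m2 p1 p2 a1 a2 ->
     mhat <= D1 /\ mhat <= D2 /\ ps1 + ps2 <= Pmax /\ D1 * ps1 + D2 * ps2 <= m1 * p1 + m2 * p2).
  { intros m1 m2 p1 p2 a1 a2 Hf.
    destruct Hf as [F1 [F2 [Hm1 [Hm2 [Hp1 [Hp2 [HP12 [Ha1 Ha2]]]]]]]].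
    assert (Ha10 : 0 <= a1).
    { rewrite Ha1. apply Rle_mult_inv_pos; [nra|]. nra. }
    assert (Ha20 : 0 <= a2) by (rewrite Ha2; nra).
    destruct (key q1 N1 m1 D1 a1 gs1 HN1 Hb1 ltac:(lra) Ha10 F1 Hgs1 HF1) as [K1 K1'].
    destruct (key q2 N2 m2 D2 a2 gs2 HN2 Hb2 ltac:(lra) Ha20 F2 Hgs2 HF2) as [K2 K2'].
    assert (Ep2 : p2 = a2 / g2) by (rewrite Ha2; field; lra).
    assert (Ep1 : p1 = a1 * a2 / g2 + a1 / g1).
    { assert (0 < p2*g1+1) by nra. rewrite Ha1, Ha2. field. repeat split; lra. }
    repeat split; try lra.
    - unfold ps1, ps2. rewrite Ep1, Ep2 in HP12.
      assert (gs1 * gs2 <= a1 * a2) by (apply Rmult_le_compat; lra).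
      assert (gs1 * gs2 / g2 <= a1 * a2 / g2) by (apply Rmult_le_compat_r; [left; apply Rinv_0_lt_compat|]; lra).
      assert (gs1 / g1 <= a1 / g1) by (apply Rmult_le_compat_r; [left; apply Rinv_0_lt_compat|]; lra).
      assert (gs2 / g2 <= a2 / g2) by (apply Rmult_le_compat_r; [left; apply Rinv_0_lt_compat|]; lra).
      lra.
    - unfold ps1, ps2. rewrite Ep1, Ep2.
      replace (D1 * (gs1 * gs2 / g2 + gs1 / g1) + D2 * (gs2 / g2)) with
        ((D1 * gs1) * (gs2 / g2 + 1 / g1) + (D2 * gs2) / g2) by (field; lra).
      replace (m1 * (a1 * a2 / g2 + a1 / g1) + m2 * (a2 / g2)) with
        ((m1 * a1) * (a2 / g2 + 1 / g1) + (m2 * a2) / g2) by (field; lra).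
      assert (gs2 / g2 + 1 / g1 <= a2 / g2 + 1 / g1).
      { assert (gs2 / g2 <= a2 / g2) by (apply Rmult_le_compat_r; [left; apply Rinv_0_lt_compat|]; lra). lra. }
      assert (0 <= gs2 / g2 + 1 / g1).
      { assert (0 < gs2 / g2) by (apply Rdiv_lt_0_compat; lra).
        assert (0 < 1 / g1) by (apply Rdiv_lt_0_compat; lra). lra. }
      assert (0 <= D1 * gs1) by nra.
      assert ((D1 * gs1) * (gs2 / g2 + 1 / g1) <= (m1 * a1) * (a2 / g2 + 1 / g1))
        by (apply Rmult_le_compat; lra).
      assert ((D2 * gs2) / g2 <= (m2 * a2) / g2) by (apply Rmult_le_compat_r; [left; apply Rinv_0_lt_compat|]; lra).
      lra. }
  destruct Hfeas as [m1 [m2 [p1 [p2 [a1 [a2 Hf]]]]]].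
  destruct (Gen _ _ _ _ _ _ Hf) as [HmD1 [HmD2 [HPs _]]].
  split.
  - assert (0 < gs1 / g1) by (apply Rdiv_lt_0_compat; lra).
    assert (0 < gs2 / g2) by (apply Rdiv_lt_0_compat; lra).
    assert (0 < gs1 * gs2 / g2) by (apply Rdiv_lt_0_compat; nra).
    unfold feasible. repeat split; try assumption; try lra.
    + unfold ps1, ps2. lra.
    + unfold ps2. lra.
    + unfold ps1, ps2. field. split; [lra|]. nra.
    + unfold ps2. field. lra.
  - intros m1' m2' p1' p2' a1' a2' Hf'.
    destruct (Gen _ _ _ _ _ _ Hf') as [_ [_ [_ R]]]. exact R.
Qed.
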